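(* Let $k\ge3$ be odd and $\ell\ge5$ be odd. There exists $m_0=m_0(k,\ell)$ such that for every $m\ge m_0$ the graph $H_m$ is $(C_k,C_\ell)$-Ramsey.
   Context: $H_m$ is the graph on pairwise disjoint vertex sets $V_1,\dots,V_5$, each of size $m$, whose edges are: a perfect matching between $V_1$ and $V_2$, a perfect matching between $V_3$ and $V_4$, and all possible edges between $V_i$ and $V_j$ for every other pair $\{i,j\}$ of distinct indices (there are no edges inside any $V_i$). A graph $G$ is $(H_1,H_2)$-Ramsey if every red/blue colouring of its edges contains a red copy of $H_1$ or a blue copy of $H_2$. $C_m$ is the cycle of length $m$. *)

(* Defs.v *)
From mathcomp Require Import all_boot.
Set Implicit Arguments. Unset Strict Implicit. Unset Printing Implicit Defensive.

Definition has_cycle (T : finType) (E : rel T) (k : nat) : Prop :=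
  exists f : 'I_k -> T, injective f /\ forall i : 'I_k, E (f i) (f (ordS i)).

(* Red/blue edge colourings are symmetric functions c : T -> T -> bool
   (c x y = true means the edge xy is red).  G is (C_k, C_l)-Ramsey if every
   colouring has a red C_k or a blue C_l. *)
Definition cycle_ramsey (T : finType) (G : rel T) (k l : nat) : Prop :=
  forall c : T -> T -> bool, (forall x y, c x y = c y x) ->
    has_cycle (fun x y => G x y && c x y) k \/
    has_cycle (fun x y => G x y && ~~ c x y) l.

(* Parts V_1..V_5 are indexed 0..4; vertex (i, a) is the a-th vertex of V_(i+1).
   Matched pairs: {V_1,V_2} = {0,1} and {V_3,V_4} = {2,3}. *)
Definition matched_pair (i j : nat) : bool :=
  ((minn i j == 0) && (maxn i j == 1)) || ((minn i j == 2) && (maxn i j == 3)).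

Definition Hm_adj (m : nat) : rel ('I_5 * 'I_m) :=
  fun x y =>
    if x.1 == y.1 then false
    else if matched_pair x.1 y.1 then x.2 == y.2
    else true.

(* Main.v *)
Require Import Defs.
From mathcomp Require Import all_boot zify.
Set Implicit Arguments. Unset Strict Implicit. Unset Printing Implicit Defensive.

Definition atom (e1 e2 : nat * nat) : nat :=
  if e1.2 == e2.2 then 100 + 5 * minn e1.1 e2.1 + maxn e1.1 e2.1
  else if e1.2 < e2.2 then 5 * e1.1 + e2.1 else 5 * e2.1 + e1.1.

Definition lit := (nat * bool)%type.
Fixpoint lookup (a : seq lit) (x : nat) : option bool :=
  if a is l :: a' then (if x == l.1 then Some l.2 else lookup a' x) else None.
Definition sat_lit a (l : lit) := lookup a l.1 == Some l.2.
Definition notcontra a (l : lit) := lookup a l.1 != Some (~~ l.2).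
Definition unassigned a (l : seq lit) := [seq li <- l | lookup a li.1 == None].
Fixpoint pickb a (cs : seq (seq lit)) (best : option (nat * nat)) : option nat :=
  match cs with
  | [::] => omap snd best
  | l :: cs' =>
    let u := unassigned a l in
    match u with
    | [::] => pickb a cs' best
    | li :: _ =>
      match best with
      | Some (sz, _) => if size u < sz then pickb a cs' (Some (size u, li.1)) else pickb a cs' best
      | None => pickb a cs' (Some (size u, li.1))
      end
    end
  end.
Fixpoint cover (fuel : nat) (a : seq lit) (ps : seq (seq lit)) : bool :=
  let cs := [seq l <- ps | all (notcontra a) l] in
  if has (all (sat_lit a)) cs then true else
  match fuel with
  | 0 => false
  | f.+1 => match pickb a cs None with
            | None => false
            | Some x => cover f ((x, true) :: a) cs && cover f ((x, false) :: a) cs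
            end
  end.

Lemma cover_sound fuel a ps (sg : nat -> bool) :
  cover fuel a ps -> (forall x v, lookup a x = Some v -> sg x = v) ->
  exists2 l, l \in ps & all (fun li => sg li.1 == li.2) l.
Proof.
elim: fuel a ps => [|f IH] a ps /=.
  case: hasP => // -[l]; rewrite mem_filter => /andP[_ lps] hl _ cons.
  exists l => //; apply/allP => li /(allP hl); rewrite /sat_lit => /eqP/cons ->.
  by [].
case: hasP => [[l]|_].
  rewrite mem_filter => /andP[_ lps] hl _ cons.
  exists l => //; apply/allP => li /(allP hl); rewrite /sat_lit => /eqP/cons ->.
  by [].
case: (pickb _ _ _) => // x /andP[h1 h2] cons.
have cons' : forall y v, lookup ((x, sg x) :: a) y = Some v -> sg y = v.
  move=> y v /=; case: eqP => [-> [] //|_]; exact: cons.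
have [l]: exists2 l, l \in [seq l <- ps | all (notcontra a) l] &
    all (fun li => sg li.1 == li.2) l.
  by case E: (sg x) cons' => cons'; [exact: IH h1 cons' | exact: IH h2 cons'].
by rewrite mem_filter => /andP[_ lps] hl; exists l.
Qed.

Definition lits (pb : bool * seq (nat * nat)) : seq lit :=
  let p := pb.2 in
  [seq (atom (nth (0,0) p t) (nth (0,0) p ((t + 1) %% size p)), pb.1) | t <- iota 0 (size p)].
Definition pats : seq (bool * seq (nat*nat)) := [::
  (true, [:: (2,1); (0,0); (1,0)]);
  (false, [:: (2,1); (0,0); (1,0)]);
  (true, [:: (3,1); (0,0); (1,0)]);
  (false, [:: (3,1); (0,0); (1,0)]);
  (true, [:: (4,1); (0,0); (1,0)]);
  (false, [:: (4,1); (0,0); (1,0)]);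
  (true, [:: (4,1); (0,0); (2,0)]);
  (false, [:: (4,1); (0,0); (2,0)]);
  (true, [:: (2,1); (3,1); (0,0)]);
  (false, [:: (2,1); (3,1); (0,0)]);
  (true, [:: (2,1); (4,0); (0,0)]);
  (false, [:: (2,1); (4,0); (0,0)]);
  (true, [:: (2,1); (4,1); (0,0)]);
  (false, [:: (2,1); (4,1); (0,0)]);
  (true, [:: (2,1); (4,2); (0,0)]);
  (false, [:: (2,1); (4,2); (0,0)]);
  (true, [:: (2,2); (4,1); (0,0)]);
  (false, [:: (2,2); (4,1); (0,0)]);
  (true, [:: (4,1); (0,0); (3,0)]);
  (true, [:: (3,1); (4,0); (0,0)]);
  (false, [:: (3,1); (4,0); (0,0)]);
  (true, [:: (3,1); (4,1); (0,0)]);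
  (false, [:: (3,1); (4,1); (0,0)]);
  (true, [:: (3,1); (4,2); (0,0)]);
  (false, [:: (3,1); (4,2); (0,0)]);
  (true, [:: (3,2); (4,1); (0,0)]);
  (false, [:: (3,2); (4,1); (0,0)]);
  (false, [:: (1,1); (0,1); (2,0)]);
  (false, [:: (1,1); (0,1); (3,0)]);
  (false, [:: (0,1); (3,0); (2,0)]);
  (true, [:: (0,1); (4,2); (2,0)]);
  (false, [:: (0,1); (4,2); (2,0)]);
  (true, [:: (2,2); (4,0); (0,1)]);
  (false, [:: (2,2); (4,0); (0,1)]);
  (true, [:: (0,1); (4,2); (3,0)]);
  (true, [:: (3,2); (4,0); (0,1)]);
  (true, [:: (4,1); (1,0); (2,0)]);
  (true, [:: (2,1); (3,1); (1,0)]);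
  (false, [:: (2,1); (3,1); (1,0)]);
  (true, [:: (2,1); (4,0); (1,0)]);
  (false, [:: (2,1); (4,0); (1,0)]);
  (true, [:: (2,1); (4,1); (1,0)]);
  (false, [:: (2,1); (4,1); (1,0)]);
  (true, [:: (2,1); (4,2); (1,0)]);
  (false, [:: (2,1); (4,2); (1,0)]);
  (true, [:: (2,2); (4,1); (1,0)]);
  (false, [:: (2,2); (4,1); (1,0)]);
  (true, [:: (4,1); (1,0); (3,0)]);
  (true, [:: (3,1); (4,0); (1,0)]);
  (false, [:: (3,1); (4,0); (1,0)]);
  (true, [:: (3,1); (4,1); (1,0)]);
  (false, [:: (3,1); (4,1); (1,0)]);
  (false, [:: (3,1); (4,2); (1,0)]);
  (false, [:: (3,2); (4,1); (1,0)]);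
  (true, [:: (2,2); (4,0); (1,1)]);
  (true, [:: (3,2); (4,0); (1,1)]);
  (true, [:: (4,1); (2,0); (3,0)]);
  (false, [:: (4,1); (2,0); (3,0)]);
  (false, [:: (2,1); (1,1); (0,1); (2,2); (0,0)]);
  (false, [:: (2,1); (3,1); (0,1); (2,2); (0,0)]);
  (false, [:: (3,1); (1,1); (0,1); (3,2); (0,0)]);
  (false, [:: (3,1); (2,1); (0,1); (3,2); (0,0)]);
  (false, [:: (2,2); (1,0); (2,1); (0,1); (1,1)]);
  (false, [:: (2,1); (3,1); (1,1); (2,2); (1,0)]);
  (false, [:: (4,1); (3,1); (2,1); (4,2); (2,0)]);
  (false, [:: (2,1); (3,1); (4,2); (0,0); (1,0)]);
  (false, [:: (2,1); (4,0); (3,1); (0,0); (1,0)]);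
  (false, [:: (4,1); (0,0); (1,0); (3,0); (2,0)]);
  (false, [:: (3,1); (4,0); (2,1); (0,0); (1,0)]);
  (false, [:: (4,1); (2,0); (3,0); (0,0); (1,0)]);
  (false, [:: (4,1); (3,0); (2,0); (0,0); (1,0)]);
  (false, [:: (2,1); (1,0); (3,1); (4,2); (0,0)]);
  (false, [:: (2,1); (1,0); (4,2); (3,1); (0,0)]);
  (false, [:: (2,1); (3,1); (1,0); (4,0); (0,0)]);
  (false, [:: (2,1); (4,2); (1,0); (3,1); (0,0)]);
  (false, [:: (3,1); (1,0); (2,1); (4,2); (0,0)]);
  (false, [:: (3,1); (2,1); (1,0); (4,0); (0,0)])].
Lemma cover_pats : cover 30 [::] (map lits pats).
Proof. vm_compute. reflexivity. Qed.


Section Ramsey.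
Variables (C : finType) (c0 : C).

Lemma sum_count (f : nat -> C) s :
  \sum_(col : C) count (fun y => f y == col) s = size s.
Proof.
elim: s => [|x s IH] /=; first by rewrite big1.
rewrite big_split /= IH (bigD1 (f x)) //= eqxx big1 ?addn0 //.
by move=> col; rewrite eq_sym => /negbTE ->.
Qed.

Lemma pigeon (f : nat -> C) s N : #|C| * N <= size s ->
  exists col, N <= count (fun y => f y == col) s.
Proof.
case: N => [|N] h; first by exists c0.
have [col Hc|none] := pickP (fun col => N.+1 <= count (fun y => f y == col) s).
  by exists col.
have C0 : 0 < #|C| by apply/card_gt0P; exists c0.
have : size s <= #|C| * N.
  rewrite -(sum_count f) -sum_nat_const; apply: leq_sum => col _.
  by move: (none col) => /= /negbT; rewrite -leqNgt.
move=> h2; have := leq_trans h h2; nia.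
Qed.

Definition B M := iter M (fun b => #|C| * b + 1) 0.

Variable chi : nat -> nat -> C.

Lemma endhom M L : sorted ltn L -> B M <= size L ->
  exists ys (kap : nat -> C), [/\ size ys = M, subseq ys L &
    forall a b, a < b -> b < M -> chi (nth 0 ys a) (nth 0 ys b) = kap a].
Proof.
elim: M L => [|M IH] L sL hL.
  exists [::], (fun _ => c0); split => //; first exact: sub0seq.
case: L sL hL => [|x L] sL hL; first by rewrite /= addn1 in hL.
have h' : #|C| * B M <= size L by move: hL; rewrite /= addn1 ltnS.
have [col Hc] := @pigeon (chi x) L (B M) h'.
set L' := [seq y <- L | chi x y == col].
have sL' : sorted ltn L' := sorted_filter ltn_trans _ (path_sorted sL).
have [ys [kap [Hs Hsub Hk]]] := IH L' sL' ltac:(by rewrite size_filter).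
exists (x :: ys), (fun a => match a with 0 => col | S a1 => kap a1 end); split.
- by rewrite /= Hs.
- by rewrite /= eqxx; exact: subseq_trans Hsub (filter_subseq _ _).
move=> [|a] [|b] //= hab hb.
  have : nth 0 ys b \in L' by apply: (mem_subseq Hsub); apply: mem_nth; rewrite Hs.
  by rewrite mem_filter => /andP[/eqP].
by apply: Hk.
Qed.

Lemma ramsey_hom n : exists2 zs : seq nat,
   [/\ sorted ltn zs, n <= size zs & all (fun z => z < B (#|C| * n)) zs] &
   exists col, forall x y, x \in zs -> y \in zs -> x < y -> chi x y = col.
Proof.
set M := #|C| * n.
have [ys [kap [Hs Hsub Hk]]] := @endhom M (iota 0 (B M)) (iota_ltn_sorted _ _)
   ltac:(by rewrite size_iota).
have sys : sorted ltn ys := subseq_sorted ltn_trans Hsub (iota_ltn_sorted _ _).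
have [col Hc] := @pigeon (fun y => kap (index y ys)) ys n ltac:(by rewrite Hs).
exists [seq y <- ys | kap (index y ys) == col]; first split.
- by apply: (sorted_filter ltn_trans).
- by rewrite size_filter.
- apply/allP => z; rewrite mem_filter => /andP[_ /(mem_subseq Hsub)].
  by rewrite mem_iota.
exists col => x y; rewrite !mem_filter => /andP[/eqP kx xs] /andP[_ ys'] xy.
have ixy : index x ys < index y ys.
  rewrite ltnNge leq_eqVlt; apply/negP => /orP[/eqP e|lt].
    by move: xy; rewrite -(nth_index 0 xs) -(nth_index 0 ys') e ltnn.
  by have := sorted_ltn_index ltn_trans sys _ _ ys' xs lt; rewrite ltnNge ltnW.
have := Hk _ _ ixy; rewrite -Hs index_mem => /(_ ys').
by rewrite !nth_index // kx.
Qed.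
End Ramsey.


Definition wf (p : seq (nat * nat)) : bool :=
  [&& 2 < size p, uniq p, all (fun e => (e.1 < 5) && (e.2 < 3)) p,
   all (fun t => let e1 := nth (0,0) p t in
                 let e2 := nth (0,0) p ((t + 1) %% size p) in
                 (e1.1 != e2.1) && (matched_pair e1.1 e2.1 ==> (e1.2 == e2.2)))
       (iota 0 (size p)) &
   (nth (0,0) p (size p).-1).2 < (nth (0,0) p 0).2].

Lemma inord5_eq (a b : nat) : a < 5 -> b < 5 -> ((inord a : 'I_5) == inord b) = (a == b).
Proof. by move=> ha hb; rewrite -val_eqE /= !inordK. Qed.

Lemma matched_pair_sym a b : matched_pair a b = matched_pair b a.
Proof. by rewrite /matched_pair minnC maxnC. Qed.

Section Cyc.
Variables (m : nat) (c : 'I_5 * 'I_m -> 'I_5 * 'I_m -> bool).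
Hypothesis csym : forall x y, c x y = c y x.
Variables (S : nat -> 'I_m) (n : nat).
Hypothesis Sinj : forall p q, p < n -> q < n -> S p = S q -> p = q.
Variables (F X : 'I_5 -> 'I_5 -> bool).
Hypothesis HF : forall i j p q, p < q -> q < n -> c (i, S p) (j, S q) = F i j.
Hypothesis HX : forall i j p, p < n -> c (i, S p) (j, S p) = X i j.
Hypothesis n_gt0 : 0 < n.

Definition col (e1 e2 : nat * nat) : bool :=
  if e1.2 == e2.2 then X (inord e1.1) (inord e2.1)
  else if e1.2 < e2.2 then F (inord e1.1) (inord e2.1) else F (inord e2.1) (inord e1.1).

Definition sg (a : nat) : bool :=
  if a < 100 then F (inord (a %/ 5)) (inord (a %% 5))
  else X (inord ((a - 100) %/ 5)) (inord ((a - 100) %% 5)).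

Lemma Xsym i j : X i j = X j i.
Proof. by rewrite -(HX i j n_gt0) -(HX j i n_gt0) csym. Qed.

Lemma divmod5 a b : b < 5 -> (5 * a + b) %/ 5 = a /\ (5 * a + b) %% 5 = b.
Proof. move=> hb; split; lia. Qed.

Lemma sg_atom e1 e2 : e1.1 < 5 -> e2.1 < 5 -> sg (atom e1 e2) = col e1 e2.
Proof.
case: e1 e2 => [p1 r1] [p2 r2] /= h1 h2; rewrite /atom /col /sg /=.
case: eqP => _.
  have -> : (100 + 5 * minn p1 p2 + maxn p1 p2 < 100) = false by lia.
  have -> : 100 + 5 * minn p1 p2 + maxn p1 p2 - 100 = 5 * minn p1 p2 + maxn p1 p2 by lia.
  have hm : maxn p1 p2 < 5 by lia.
  have [->->] := divmod5 (minn p1 p2) hm.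
  by case: (leqP p1 p2) => _ //; exact: Xsym.
case: (r1 < r2).
  have -> : 5 * p1 + p2 < 100 by lia.
  by have [->->] := divmod5 p1 h2.
have -> : 5 * p2 + p1 < 100 by lia.
by have [->->] := divmod5 p2 h1.
Qed.

Definition Gp (G r : nat) := r.+1 * G.+1.

Lemma adjE a b x y : a < 5 -> b < 5 -> x < n -> y < n ->
  Hm_adj (inord a, S x) (inord b, S y) = (a != b) && (matched_pair a b ==> (x == y)).
Proof.
move=> ha hb hx hy; rewrite /Hm_adj /= inord5_eq // !inordK //.
case: eqP => //= _; case: matched_pair => //=.
by apply/eqP/eqP => [/Sinj -> // | ->].
Qed.

Lemma colE a b x y : x < n -> y < n ->
  c (inord a, S x) (inord b, S y) =
  if x == y then X (inord a) (inord b) else if x < y then F (inord a) (inord b) else F (inord b) (inord a).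
Proof.
move=> hx hy; case: eqP => [->|ne]; first exact: HX.
case: ltnP => h; first exact: HF.
rewrite csym HF //; lia.
Qed.

Section Pat.
Variables (p : seq (nat * nat)) (b : bool) (s G : nat).
Hypothesis wfp : wf p.
Hypothesis colp : forall t, t < size p -> col (nth (0,0) p t) (nth (0,0) p ((t + 1) %% size p)) = b.
Hypothesis sG : 2 * s <= G.
Hypothesis Gn : 3 * G.+1 < n.

Let r := size p.
Let e t := nth (0,0) p t.
Let V t : 'I_5 * 'I_m := (inord (e t).1, S (Gp G (e t).2)).
Let i := (e r.-1).1.
Let ra := (e r.-1).2.
Let h := (e 0).1.
Let rb := (e 0).2.
Let base := Gp G rb - G.
Let u q : 'I_5 * 'I_m := (inord i, S (base + q)).
Let w q : 'I_5 * 'I_m := (inord h, S (base + s + q)).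
Let g t := if t < r then V t else if odd (t - r) then u (t - r)./2 else w (t - r)./2.
Let L := r + 2 * s.

Lemma gen_cycle : has_cycle (fun x y => Hm_adj x y && (c x y == b)) L.
Proof.
move: wfp => /and5P[r2 up bnd adjp rab].
have eb t : t < r -> ((e t).1 < 5) && ((e t).2 < 3).
  by move=> ht; apply: (allP bnd); apply: mem_nth.
have r0 : 0 < r by apply: leq_trans r2.
have rr : r.-1 < r by rewrite prednK.
have Gpn x : x < 3 -> Gp G x < n.
  move=> hx; apply: leq_ltn_trans Gn; rewrite /Gp; apply: leq_mul => //.
have Gpeq x y : (Gp G x == Gp G y) = (x == y) by rewrite /Gp eqn_pmul2r // eqSS.
have Gplt x y : (Gp G x < Gp G y) = (x < y) by rewrite /Gp ltn_pmul2r // ltnS.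
have /andP[hi hra] := eb _ rr.
have /andP[hh hrb] := eb _ r0.
have rabE : ra < rb by [].
have adj0 := allP adjp r.-1; rewrite mem_iota add0n rr addn1 prednK // modnn in adj0.
have /andP[ih mih] := adj0 isT.
have mih' : matched_pair i h = false.
  by apply/negP => mh; move: (implyP mih mh); rewrite -/ra -/rb => /eqP e'; move: rabE; rewrite e' ltnn.
have baseE : base = rb * G.+1 + 1 by rewrite /base /Gp; lia.
have posn x : x < G -> base + x < n.
  move=> hx; have := Gpn _ hrb; rewrite baseE /Gp; lia.
have rawpos x : x < G -> Gp G rb - G <= base + x < Gp G rb.
  by move=> hx; rewrite baseE /Gp; lia.
have GpNbase x y : y < 3 -> x < G -> Gp G y != base + x.
  move=> hy hx; rewrite baseE /Gp; apply/eqP => E.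
  case: (leqP y.+1 rb) => hyr.
    have : y.+1 * G.+1 <= rb * G.+1 by apply: leq_mul.
    lia.
  have : rb.+1 * G.+1 <= y.+1 * G.+1 by apply: leq_mul.
  lia.
have gV t : t < r -> g t = V t by rewrite /g => ->.
have gw q : g (r + q.*2) = w q.
  by rewrite /g ltnNge leq_addr /= addKn odd_double doubleK.
have gu q : g (r + (q.*2).+1) = u q.
  have h2 : (q.*2).+1./2 = q by exact: (half_bit_double q true).
  by rewrite /g ltnNge leq_addr /= addKn /= odd_double uphalf_double.
have classify t : t < L -> [\/ t < r, exists2 q, q < s & t = r + q.*2 |
                                exists2 q, q < s & t = r + (q.*2).+1].
  move=> ht; case: (ltnP t r) => htr; first by apply: Or31.
  have := odd_double_half (t - r); case: (odd (t - r)) => /= E.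
    by apply: Or33; exists (t - r)./2; lia.
  by apply: Or32; exists (t - r)./2; lia.
have Vedge t1 t2 : t1 < r -> t2 < r ->
   Hm_adj (V t1) (V t2) = ((e t1).1 != (e t2).1) && (matched_pair (e t1).1 (e t2).1 ==> ((e t1).2 == (e t2).2))
   /\ c (V t1) (V t2) = col (e t1) (e t2).
  move=> h1 h2; have /andP[a1 b1] := eb _ h1; have /andP[a2 b2] := eb _ h2.
  rewrite /V adjE ?Gpn // Gpeq; split => //.
  rewrite colE ?Gpn // Gpeq Gplt /col.
  by case: eqP => // ->.
have patedge t : t < r -> Hm_adj (V t) (V ((t + 1) %% r)) && (c (V t) (V ((t + 1) %% r)) == b).
  move=> ht; have ht' : (t + 1) %% r < r by rewrite ltn_mod.
  have [-> ->] := Vedge _ _ ht ht'.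
  by rewrite (colp ht) eqxx andbT; apply: (allP adjp); rewrite mem_iota add0n.
have cross x y : x < n -> y < n -> x < y ->
    Hm_adj (inord i, S x) (inord h, S y) && (c (inord i, S x) (inord h, S y) == b).
  move=> hx hy xy; rewrite adjE // ih mih' colE //.
  have -> : (x == y) = false by apply/negP => /eqP E; move: xy; rewrite E ltnn.
  rewrite xy /=.
  have := colp rr; rewrite -/(e r.-1) addn1 prednK // modnn -/(e 0) /col.
  rewrite -/ra -/rb ifN; last by rewrite neq_ltn rabE.
  by rewrite rabE => ->.
have crossS x y : x < n -> y < n -> x < y ->
    Hm_adj (inord h, S y) (inord i, S x) && (c (inord h, S y) (inord i, S x) == b).
  move=> hx hy xy; have := cross x y hx hy xy.
  by rewrite csym !adjE // eq_sym matched_pair_sym [y == x]eq_sym.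
have pinj a a' x y : a < 5 -> a' < 5 -> x < n -> y < n ->
    ((inord a : 'I_5), S x) = (inord a', S y) -> a = a' /\ x = y.
  move=> ha ha' hx hy [/(congr1 val)]; rewrite /= !inordK // => -> /Sinj -> //.
have sG' q : q < s -> s + q < G by lia.
have Vp t : t < r -> V t = (inord (e t).1, S (Gp G (e t).2)) by [].
have ginj t1 t2 : t1 < L -> t2 < L -> g t1 = g t2 -> t1 = t2.
  have bw q : q < s -> base + s + q < n by move=> hq; rewrite -addnA; apply: posn; apply: sG'.
  have bu q : q < s -> base + q < n by move=> hq; apply: posn; lia.
  have VNw t q : t < r -> q < s -> V t <> w q.
    move=> ht hq; case/andP: (eb _ ht) => a1 b1.
    move/(pinj _ _ _ _ a1 hh (Gpn _ b1) (bw _ hq)) => [_ E].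
    by have := GpNbase _ _ b1 (sG' _ hq); rewrite E addnA eqxx.
  have VNu t q : t < r -> q < s -> V t <> u q.
    move=> ht hq; case/andP: (eb _ ht) => a1 b1.
    move/(pinj _ _ _ _ a1 hi (Gpn _ b1) (bu _ hq)) => [_ E].
    have hq' : q < G by lia.
    by have := GpNbase _ _ b1 hq'; rewrite E eqxx.
  have uNw q1 q2 : q1 < s -> q2 < s -> u q1 <> w q2.
    move=> h1 h2 /(pinj _ _ _ _ hi hh (bu _ h1) (bw _ h2)) [E _].
    by move: ih; rewrite E eqxx.
  move=> h1 h2; case/classify: (h1) => [ht1|[q1 hq1 ->]|[q1 hq1 ->]];
    case/classify: (h2) => [ht2|[q2 hq2 ->]|[q2 hq2 ->]];
    try rewrite (gV _ ht1); try rewrite (gV _ ht2); rewrite ?gw ?gu.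
  - move=> E; apply/eqP; rewrite -(nth_uniq (0,0) ht1 ht2 up); apply/eqP.
    have /andP[a1 b1] := eb _ ht1; have /andP[a2 b2] := eb _ ht2.
    move: E => /(pinj _ _ _ _ a1 a2 (Gpn _ b1) (Gpn _ b2)) [E1 E2].
    by move: E2 => /eqP; rewrite Gpeq => /eqP; rewrite -/(e t1) -/(e t2); case: (e t1) E1 => ? ? /=; case: (e t2) => ? ? /= -> ->.
  - by move/(VNw _ _ ht1 hq2).
  - by move/(VNu _ _ ht1 hq2).
  - by move=> E; case: (VNw _ _ ht2 hq1).
  - by move/(pinj _ _ _ _ hh hh (bw _ hq1) (bw _ hq2)) => [_ E]; lia.
  - by move=> E; case: (uNw _ _ hq2 hq1).
  - by move=> E; case: (VNu _ _ ht2 hq1).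
  - by move/(uNw _ _ hq1 hq2).
  - by move/(pinj _ _ _ _ hi hi (bu _ hq1) (bu _ hq2)) => [_ E]; lia.
have hGa : Gp G ra < base.
  rewrite baseE /Gp; have := leq_mul (rabE : ra.+1 <= rb) (leqnn G.+1); lia.
have hGb : base + G = Gp G rb by rewrite baseE /Gp; lia.
have Gbn := Gpn _ hrb.
have gedge t : t < L -> Hm_adj (g t) (g (t.+1 %% L)) && (c (g t) (g (t.+1 %% L)) == b).
  move=> ht; case/classify: (ht) => [htr|[q hq ->]|[q hq ->]].
  - rewrite (gV _ htr).
    case: (ltnP t.+1 r) => htr'.
      rewrite modn_small; last by rewrite /L; lia.
      by rewrite (gV _ htr'); have := patedge _ htr; rewrite addn1 modn_small.
    have tE : t = r.-1 by lia.
    case: (posnP s) => [s0|spos].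
      have -> : t.+1 %% L = 0.
        have -> : t.+1 = L by rewrite /L s0; lia.
        by rewrite modnn.
      rewrite (gV _ r0); have := patedge _ htr.
      have -> : t + 1 = r by lia.
      by rewrite modnn.
    rewrite modn_small; last by rewrite /L; lia.
    have -> : t.+1 = r + 0.*2 by lia.
    rewrite gw tE; apply: cross => //; first exact: Gpn.
      by rewrite addn0; apply: posn; lia.
    change (Gp G ra < base + s + 0); lia.
  - rewrite gw modn_small; last by rewrite /L; lia.
    rewrite -addnS gu; apply: crossS; rewrite ?posn //; try lia.
    by rewrite -addnA; apply: posn; lia.
  - rewrite gu; case: (ltnP q.+1 s) => hq'.
      rewrite modn_small; last by rewrite /L; lia.
      have -> : (r + (q.*2).+1).+1 = r + (q.+1).*2 by lia.
      rewrite gw; apply: cross; rewrite ?posn //; try lia.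
      by rewrite -addnA; apply: posn; lia.
    have -> : (r + (q.*2).+1).+1 %% L = 0.
      have -> : (r + (q.*2).+1).+1 = L by rewrite /L; lia.
      by rewrite modnn.
    rewrite (gV _ r0); apply: cross; rewrite ?posn //; try lia. change (base + q < Gp G rb); lia.
exists (fun t : 'I_L => g t); split.
  by move=> t1 t2 /= E; apply: val_inj; apply: ginj E; apply: ltn_ord.
by move=> t; apply: gedge; apply: ltn_ord.
Qed.
End Pat.
End Cyc.


Lemma has_cycle_ext (T : finType) (E E' : rel T) k :
  (forall x y, E x y = E' x y) -> has_cycle E k -> has_cycle E' k.
Proof. by move=> h [f [fi fe]]; exists f; split => // i; rewrite -h. Qed.

Lemma pats_ok : all (fun pb => wf pb.2 && (if pb.1 then size pb.2 == 3
                   else (size pb.2 == 3) || (size pb.2 == 5))) pats.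
Proof. vm_compute. reflexivity. Qed.

Notation Col := ({ffun 'I_5 * 'I_5 -> bool} * {ffun 'I_5 * 'I_5 -> bool})%type.
Definition col0 : Col := ([ffun=> false], [ffun=> false]).

Theorem lemma3p3 (k l : nat) :
  3 <= k -> odd k -> 5 <= l -> odd l ->
  exists m0 : nat, forall m : nat, m0 <= m -> cycle_ramsey (@Hm_adj m) k l.
Proof.
move=> k3 ko l5 lo.
set G := k + l.
set n := (3 * G.+1).+1.
exists (B Col (#|{: Col}| * n.+1)).+1.
case=> [//|m'] hm c csym.
pose toI (x : nat) : 'I_m'.+1 := inord x.
pose chi (x y : nat) : Col :=
  ([ffun ij : 'I_5 * 'I_5 => c (ij.1, toI x) (ij.2, toI y)],
   [ffun ij : 'I_5 * 'I_5 => c (ij.1, toI x) (ij.2, toI x)]).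
have [zs [szs nzs bzs] [cl hcl]] := ramsey_hom col0 chi n.+1.
pose S p := toI (nth 0 zs p).
have hsz p : p <= n -> p < size zs by move=> hp; apply: leq_ltn_trans hp nzs.
have zm p : p < size zs -> nth 0 zs p < m'.+1.
  move=> hp; have := allP bzs _ (mem_nth 0 hp); rewrite ltnS in hm => h.
  exact: leqW (leq_trans h hm).
have zlt p q : p < q -> q < size zs -> nth 0 zs p < nth 0 zs q.
  move=> pq hq; apply: (sorted_ltn_nth ltn_trans 0 szs) => //.
  by rewrite inE; apply: ltn_trans hq.
have Sinj p q : p < n -> q < n -> S p = S q -> p = q.
  move=> hp hq; have hp' : p < size zs by apply: hsz; lia.
  have hq' : q < size zs by apply: hsz; lia.
  move/(congr1 val); rewrite /S /toI /= !inordK; try apply: zm => //.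
  move=> E; apply/eqP; rewrite -(nth_uniq 0 hp' hq' (sorted_uniq ltn_trans ltnn szs)) E //.
pose F (i j : 'I_5) := cl.1 (i, j).
pose X (i j : 'I_5) := cl.2 (i, j).
have HF i j p q : p < q -> q < n -> c (i, S p) (j, S q) = F i j.
  move=> pq hq; have hz : nth 0 zs q \in zs by apply: mem_nth; apply: hsz; lia.
  have hz' : nth 0 zs p \in zs by apply: mem_nth; apply: hsz; lia.
  have E0 := hcl _ _ hz' hz (zlt _ _ pq ltac:(apply: hsz; lia)).
  move: E0 => /(congr1 (fun x : Col => x.1 (i, j))).
  by rewrite ffunE.
have HX i j p : p < n -> c (i, S p) (j, S p) = X i j.
  move=> hp; have hz : nth 0 zs n \in zs by apply: mem_nth; apply: hsz; lia.
  have hz' : nth 0 zs p \in zs by apply: mem_nth; apply: hsz; lia.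
  have E0 := hcl _ _ hz' hz (zlt _ _ hp ltac:(apply: hsz; lia)).
  move: E0 => /(congr1 (fun x : Col => x.2 (i, j))).
  by rewrite ffunE.
have n0 : 0 < n by [].
have [lt] := @cover_sound _ _ _ (sg F X) cover_pats (fun x v (H : None = Some v) => match H with end).
case/mapP => pb hpb -> hall.
have /andP[wfp hsz2] := allP pats_ok _ hpb.
have colp t : t < size pb.2 ->
    col F X (nth (0,0) pb.2 t) (nth (0,0) pb.2 ((t + 1) %% size pb.2)) = pb.1.
  move=> ht; have := allP hall (atom (nth (0,0) pb.2 t) (nth (0,0) pb.2 ((t + 1) %% size pb.2)), pb.1).
  rewrite /= => /(_ _)/eqP <-.
    move: wfp => /and5P[_ _ bnd _ _].
    have hb u : u < size pb.2 -> (nth (0,0) pb.2 u).1 < 5.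
      by move=> hu; case/andP: (allP bnd _ (mem_nth (0,0) hu)).
    rewrite (sg_atom csym F HX n0) //; apply: hb => //.
    by rewrite ltn_mod; case: (size pb.2) ht.
  by apply/mapP; exists t => //; rewrite mem_iota.
case: pb hpb hall wfp hsz2 colp => [[] p] /= _ _ wfp hsz2 colp.
- left; move/eqP: hsz2 => hsz2.
  have := gen_cycle csym Sinj HF HX n0 (s := (k - 3)./2) (G := G) wfp colp ltac:(lia) ltac:(lia).
  have -> : size p + 2 * (k - 3)./2 = k.
    rewrite hsz2; have := odd_double_half (k - 3); rewrite oddB // ko /=; lia.
  by apply: has_cycle_ext => x y; rewrite eqb_id.
- right.
  have hl : size p + 2 * (l - size p)./2 = l.
    have := odd_double_half (l - size p); rewrite oddB; last by case/orP: hsz2 => /eqP ->; lia.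
    by rewrite lo; case/orP: hsz2 => /eqP -> /=; lia.
  have := gen_cycle csym Sinj HF HX n0 (s := (l - size p)./2) (G := G) wfp colp ltac:(lia) ltac:(lia).
  rewrite hl; apply: has_cycle_ext => x y; by rewrite eqbF_neg.
Qed.
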